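(* Under the standing assumptions of the context, there are constants $0<\tilde c_0\le1\le\tilde c$ such that for every $\ell\ge1$ and every $n\ge2$ with $\mathcal K_\ell\cap[1,n)^2\ne\emptyset$, \[ \frac{\tilde c_0}{\ell^2}\le\delta_\ell(n)\le\frac{\tilde c}{\ell^2},\qquad\text{where }\ \delta_\ell(n)=\frac{\#(\mathcal K_\ell\cap[1,n)^2)}{n^2-n}. \]
   Context: Standing assumptions: $A=\{0,1\}$, $\Sigma=A^{\mathbb N_0}$ with metric $\rho(y,z)=2^{-\min\{i\ge0:\,y_i\ne z_i\}}$ ($y\ne z$) and shift $\sigma$. $\zeta:A\to A^*$ is a binary substitution of constant length $q\ge2$ ($|\zeta(0)|=|\zeta(1)|=q$, extended to words and sequences by concatenation), which is primitive (for some $k$, every letter occurs in $\zeta^k(a)$ for all $a$), aperiodic (the subshift $X_\zeta$ of all sequences whose finite subwords are subwords of some $\zeta^k(a)$ contains a non-$\sigma$-periodic sequence), and such that $\zeta(0)$ starts with $0$; $x=\lim_k\zeta^k(0)$ is the unique fixed point of $\zeta$ starting with $0$. Recurrence plot $R(x,\infty,1/2)$: the matrix indexed by $i,j\in\mathbb N_0$ with entry $1$ iff $x_i=x_j$ (i.e. $\rho(\sigma^ix,\sigma^jx)\le1/2$). A line of length $\ell$ in it is $(i,j,\ell)$ with $i\ne j$, entries $(i+k,j+k)=1$ for $0\le k<\ell$, entry $(i-1,j-1)=0$ if $\min\{i,j\}>0$, and entry $(i+\ell,j+\ell)=0$; it is inner if $\min\{i,j\}>0$. $\mathcal K_\ell=\{(i,j)\in\mathbb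 N^2:(i,j,\ell)\text{ is an inner line in }R(x,\infty,1/2)\}$, $\mathbb N$ the positive integers, $[1,n)=\{1,\dots,n-1\}$. *)

(* Defs.v *)
(* Letters of A = {0,1} are encoded as bool: 0 = false, 1 = true. *)
From mathcomp Require Import all_boot all_order all_algebra.
Set Implicit Arguments. Unset Strict Implicit. Unset Printing Implicit Defensive.

Definition subst_word (zeta : bool -> seq bool) (w : seq bool) : seq bool :=
  flatten (map zeta w).

Definition subst_iter (zeta : bool -> seq bool) (k : nat) (a : bool) : seq bool :=
  iter k (subst_word zeta) [:: a].

Definition const_length (zeta : bool -> seq bool) (q : nat) : Prop :=
  size (zeta false) = q /\ size (zeta true) = q.

Definition primitive (zeta : bool -> seq bool) : Prop :=
  exists k, forall a b : bool, b \in subst_iter zeta k a.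

Definition in_language (zeta : bool -> seq bool) (w : seq bool) : Prop :=
  exists k a, infix w (subst_iter zeta k a).

Definition in_subshift (zeta : bool -> seq bool) (y : nat -> bool) : Prop :=
  forall m len, in_language zeta (mkseq (fun t => y (m + t)) len).

Definition shift_periodic (y : nat -> bool) : Prop :=
  exists p, 0 < p /\ forall i, y (i + p) = y i.

Definition aperiodic (zeta : bool -> seq bool) : Prop :=
  exists y, in_subshift zeta y /\ ~ shift_periodic y.

(* x is a fixed point of zeta: zeta(x) = x (for constant length q this is
   x_{kq+r} = zeta(x_k)_r). *)
Definition is_fixed_point (zeta : bool -> seq bool) (q : nat) (x : nat -> bool) : Prop :=
  forall i, x i = nth false (zeta (x (i %/ q))) (i %% q).

(* Recurrence plot R(x, oo, 1/2): entry (i,j) is 1 iff x_i = x_j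
   (equivalently rho(sigma^i x, sigma^j x) <= 1/2). *)
Definition rp (x : nat -> bool) (i j : nat) : bool := x i == x j.

Definition is_line (x : nat -> bool) (i j l : nat) : bool :=
  [&& i != j,
      all (fun k => rp x (i + k) (j + k)) (iota 0 l),
      (0 < minn i j) ==> ~~ rp x i.-1 j.-1
    & ~~ rp x (i + l) (j + l)].

Definition in_K (x : nat -> bool) (l i j : nat) : bool :=
  [&& 0 < i, 0 < j & is_line x i j l].

Definition countK (x : nat -> bool) (l n : nat) : nat :=
  \sum_(1 <= i < n) \sum_(1 <= j < n) in_K x l i j.

(* Main.v *)
Require Import Defs.
From mathcomp Require Import all_boot all_order all_algebra zify.
From Stdlib Require Import Classical.
Set Implicit Arguments. Unset Strict Implicit.

Lemma size_subst_word zeta q w : const_length zeta q ->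
  size (subst_word zeta w) = q * size w.
Proof.
move=> [h0 h1]; elim: w => [|a w IH] /=; first by rewrite muln0.
rewrite /subst_word /= size_cat -/(subst_word zeta w) IH.
by case: a; rewrite ?h0 ?h1 mulnS.
Qed.

Lemma size_subst_iter zeta q k a : const_length zeta q ->
  size (subst_iter zeta k a) = q ^ k.
Proof.
move=> hc; elim: k => [|k IH]; first by [].
rewrite /subst_iter iterS -/(subst_iter zeta k a) (size_subst_word _ hc) IH.
by rewrite expnS.
Qed.

Lemma nth_subst_word zeta q w s r : const_length zeta q -> r < q -> s < size w ->
  nth false (subst_word zeta w) (s * q + r) = nth false (zeta (nth false w s)) r.
Proof.
move=> [h0 h1] hr; elim: w s => [|a w IH] [|s] //= hs.
- rewrite /subst_word /= nth_cat mul0n add0n.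
  by case: a; rewrite ?h0 ?h1 hr.
- rewrite /subst_word /= nth_cat -/(subst_word zeta w).
  have -> : size (zeta a) = q by case: a.
  rewrite ifF; last by apply/negbTE; rewrite -leqNgt mulSn -addnA leq_addr.
  by rewrite mulSn -addnA addKn IH.
Qed.

Lemma fixE zeta q x : 0 < q -> is_fixed_point zeta q x ->
  forall s r, r < q -> x (s * q + r) = nth false (zeta (x s)) r.
Proof.
move=> hq hf s r hr; rewrite hf divnMDl // divn_small // addn0.
by rewrite modnMDl modn_small.
Qed.

Lemma blockE zeta q x : 0 < q -> const_length zeta q -> is_fixed_point zeta q x ->
  forall k w r, r < q ^ k -> x (w * q ^ k + r) = nth false (subst_iter zeta k (x w)) r.
Proof.
move=> hq hc hf; elim=> [|k IH] w r hr.
  by move: hr; rewrite expn0 ltnS leqn0 => /eqP ->; rewrite muln1 addn0.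
rewrite /subst_iter iterS -/(subst_iter zeta k (x w)).
have hs : r %/ q < q ^ k by rewrite ltn_divLR // -expnSr.
rewrite {2}(divn_eq r q) nth_subst_word ?ltn_pmod ?size_subst_iter //.
rewrite -IH //.
have -> : w * q ^ k.+1 + r = (w * q ^ k + r %/ q) * q + r %% q.
  by rewrite {1}(divn_eq r q) expnSr mulnDl mulnA addnA.
rewrite (fixE hq hf) ?ltn_pmod //.
by rewrite (size_subst_iter _ _ hc).
Qed.


Lemma prefixX zeta q x : 0 < q -> const_length zeta q -> is_fixed_point zeta q x ->
  x 0 = false -> forall k r, r < q ^ k -> x r = nth false (subst_iter zeta k false) r.
Proof.
move=> hq hc hf hx0 k r hr.
by have := blockE hq hc hf 0 hr; rewrite mul0n add0n hx0.
Qed.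

Lemma letter_pos zeta q x : 0 < q -> const_length zeta q -> is_fixed_point zeta q x ->
  x 0 = false -> primitive zeta -> forall a, exists t, x t = a.
Proof.
move=> hq hc hf hx0 [k0 hk] a.
have ha := hk false a.
exists (index a (subst_iter zeta k0 false)).
rewrite (prefixX hq hc hf hx0 (k:=k0)) ?nth_index //.
by rewrite -(size_subst_iter k0 false hc) index_mem.
Qed.

Lemma lang_in_x zeta q x : 0 < q -> const_length zeta q -> is_fixed_point zeta q x ->
  x 0 = false -> primitive zeta -> forall w, in_language zeta w ->
  exists p, forall e, e < size w -> nth false w e = x (p + e).
Proof.
move=> hq hc hf hx0 hp w [k [a /infixP [s1 [s2 hs]]]].
have [t ht] := letter_pos hq hc hf hx0 hp a.
exists (t * q ^ k + size s1) => e he.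
rewrite -addnA (blockE hq hc hf); last first.
  rewrite -(size_subst_iter k (x t) hc) ht hs !size_cat.
  by rewrite ltn_add2l ltn_addr.
by rewrite ht hs nth_cat ltnNge leq_addr /= addKn nth_cat he.
Qed.

Lemma no_period zeta q x : 0 < q -> const_length zeta q -> is_fixed_point zeta q x ->
  x 0 = false -> primitive zeta -> aperiodic zeta ->
  forall d, 0 < d -> (forall a, x (a + d) = x a) -> False.
Proof.
move=> hq hc hf hx0 hp [y [hy hny]] d hd hper.
apply: hny; exists d; split => // i.
have [p hpe] := lang_in_x hq hc hf hx0 hp (hy i d.+1).
have h0 := hpe 0; have h1 := hpe d.
rewrite size_mkseq !nth_mkseq // in h0 h1.
rewrite addn0 in h0; rewrite h1 // h0 // hper //.
by rewrite addn0.
Qed.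


Lemma pair_bound (x : nat -> bool) : exists B, forall s, exists s',
  s' < B /\ x s' = x s /\ x s'.+1 = x s.+1.
Proof.
have hab : forall a b : bool, exists B, forall s, x s = a -> x s.+1 = b ->
    exists s', s' < B /\ x s' = a /\ x s'.+1 = b.
  move=> a b; case: (classic (exists s, x s = a /\ x s.+1 = b)).
    move=> [s [h1 h2]]; exists s.+1 => _ _ _; exists s; split => //.
  move=> hn; exists 0 => s h1 h2; exfalso; apply: hn; exists s; done.
have [B1 h1] := hab false false; have [B2 h2] := hab false true.
have [B3 h3] := hab true false; have [B4 h4] := hab true true.
exists (B1 + B2 + B3 + B4) => s.
case e1: (x s); case e2: (x s.+1).
- have [s' [? ?]] := h4 s e1 e2; exists s'; split => //; lia.
- have [s' [? ?]] := h3 s e1 e2; exists s'; split => //; lia.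
- have [s' [? ?]] := h2 s e1 e2; exists s'; split => //; lia.
- have [s' [? ?]] := h1 s e1 e2; exists s'; split => //; lia.
Qed.

Lemma pair_rec zeta q x : 1 < q -> const_length zeta q -> is_fixed_point zeta q x ->
  x 0 = false -> primitive zeta ->
  exists R, forall v s, exists u, u.+1 < q ^ R /\
    x (v * q ^ R + u) = x s /\ x (v * q ^ R + u.+1) = x s.+1.
Proof.
move=> hq1 hc hf hx0 hp.
have hq : 0 < q by lia.
have [k0 hk] := hp.
have [B hB] := pair_bound x.
have hBq : B < q ^ B by apply: ltn_expl.
exists (k0 + B) => v s.
have hfl := hk (x v) false.
set t0 := index false (subst_iter zeta k0 (x v)).
have ht0 : t0 < q ^ k0 by rewrite -(size_subst_iter k0 (x v) hc) index_mem.
have hxt : x (v * q ^ k0 + t0) = false by rewrite (blockE hq hc hf) // nth_index.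
have [s' [hs1 [hs2 hs3]]] := hB s.
have hqB : 0 < q ^ B by rewrite expn_gt0 hq.
exists (t0 * q ^ B + s'); split; last split.
- rewrite expnD.
  have : t0.+1 <= q ^ k0 by [].
  move=> h; have : s'.+2 <= q ^ B by lia.
  nia.
- have -> : v * q ^ (k0 + B) + (t0 * q ^ B + s') = (v * q ^ k0 + t0) * q ^ B + s'.
    by rewrite expnD mulnDl mulnA addnA.
  rewrite (blockE hq hc hf) ?hxt; last lia.
  by rewrite -(prefixX hq hc hf hx0 (k:=B)) //; lia.
- have -> : v * q ^ (k0 + B) + (t0 * q ^ B + s').+1 = (v * q ^ k0 + t0) * q ^ B + s'.+1.
    by rewrite expnD mulnDl mulnA !addnS addnA.
  rewrite (blockE hq hc hf) ?hxt; last lia.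
  by rewrite -(prefixX hq hc hf hx0 (k:=B)) //; lia.
Qed.


Lemma exists_t q m : 1 < q -> 0 < m -> exists t, m <= q ^ t /\ q ^ t < q * m.
Proof.
move=> hq hm.
have ex : exists t, m <= q ^ t by exists m; apply: ltnW; apply: ltn_expl.
case: (ex_minnP ex) => t ht hmin; exists t; split => //.
case: t ht hmin => [|t] ht hmin; first by rewrite expn0; nia.
have : ~~ (m <= q ^ t).
  by apply/negP => h; have := hmin _ h; lia.
rewrite -ltnNge expnS => h; rewrite ltn_pmul2l //; lia.
Qed.

Lemma blockEq zeta q x : 0 < q -> const_length zeta q -> is_fixed_point zeta q x ->
  forall k w s r, x w = x s -> r < q ^ k -> x (w * q ^ k + r) = x (s * q ^ k + r).
Proof.
by move=> hq hc hf k w s r hws hr; rewrite !(blockE hq hc hf) // hws.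
Qed.

Lemma lin_rec zeta q x : 1 < q -> const_length zeta q -> is_fixed_point zeta q x ->
  x 0 = false -> primitive zeta ->
  exists K, 0 < K /\ forall m i j, 0 < m -> exists p, j <= p /\ p + m <= j + K * m /\
    forall e, e < m -> x (p + e) = x (i + e).
Proof.
move=> hq1 hc hf hx0 hp.
have hq : 0 < q by lia.
have [R hR] := pair_rec hq1 hc hf hx0 hp.
set A := q ^ R.
have hA : 0 < A by rewrite expn_gt0 hq.
exists (2 * (A * q)); split; first by nia.
move=> m i j hm.
have [t [hmQ hQm]] := exists_t hq1 hm.
set Q := q ^ t in hmQ hQm.
have hQ : 0 < Q by rewrite expn_gt0 hq.
set s := i %/ Q; set r := i %% Q.
have hi : i = s * Q + r by rewrite /s /r -divn_eq.
have hr : r < Q by rewrite ltn_pmod.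
set V := A * Q.
have hV : 0 < V by rewrite muln_gt0 hA hQ.
set v := (j + V.-1) %/ V.
have hdv : j + V.-1 = v * V + (j + V.-1) %% V by rewrite -divn_eq.
have hrr : (j + V.-1) %% V < V by rewrite ltn_pmod.
have hv1 : j <= v * V by lia.
have hv2 : v * V + 1 <= j + V by lia.
have [u [hu [hxu1 hxu2]]] := hR v s.
set w := v * A + u.
exists (w * Q + r); split; last split.
- have : v * V <= w * Q by rewrite /V /w mulnA leq_mul2r leq_addr orbT.
  lia.
- have h1 : w * Q + r + m < (w + 2) * Q by nia.
  have h2 : (w + 2) * Q <= (v + 1) * V.
    have -> : (v + 1) * V = (v * A + A) * Q by rewrite /V mulnA mulnDl mul1n.
    by rewrite leq_mul2r; apply/orP; right; rewrite /w; lia.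
  have h3 : V < A * q * m by rewrite /V -mulnA ltn_mul2l hA.
  nia.
- move=> e he.
  case: (ltnP (r + e) Q) => hre.
  + rewrite hi -!addnA (blockEq hq hc hf (k:=t) (s:=s)) //.
  + have -> : w * Q + r + e = w.+1 * Q + (r + e - Q) by rewrite mulSn; lia.
    have -> : i + e = s.+1 * Q + (r + e - Q) by rewrite hi mulSn; lia.
    rewrite (blockEq hq hc hf (k:=t) (s:=s.+1)) //; last lia.
    by rewrite /w /A -addnS hxu2.
Qed.


Lemma lr_pf zeta q x : 1 < q -> const_length zeta q -> is_fixed_point zeta q x ->
  x 0 = false -> primitive zeta -> aperiodic zeta ->
  exists K, 0 < K /\
   (forall m i j, 0 < m -> exists p, j <= p /\ p + m <= j + K * m /\
    forall e, e < m -> x (p + e) = x (i + e)) /\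
   (forall i d l, 0 < d -> (forall k, i <= k -> k < i + l -> x (k + d) = x k) ->
      l + d < K * d.+1).
Proof.
move=> hq1 hc hf hx0 hp hap.
have hq : 0 < q by lia.
have [K [hK hLR]] := lin_rec hq1 hc hf hx0 hp.
exists K; split => //; split => // i d l hd hper.
rewrite ltnNge; apply/negP => hle.
apply: (no_period hq hc hf hx0 hp hap hd) => a.
have [p [hp1 [hp2 he]]] := hLR d.+1 a i (ltn0Sn d).
have h0 := he 0 (ltn0Sn d); have hd' := he d (ltnSn d).
rewrite !addn0 in h0.
rewrite -hd' -h0 hper //; lia.
Qed.


Lemma in_KP x l i j : in_K x l i j ->
  [/\ 0 < i, 0 < j, (forall k, k < l -> x (i + k) = x (j + k)),
      x i.-1 <> x j.-1 & x (i + l) <> x (j + l)].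
Proof.
rewrite /in_K /is_line /rp => /and3P [hi hj /and4P [_ /allP ha hb hc]].
split => //.
- by move=> k hk; apply/eqP; apply: ha; rewrite mem_iota.
- have hm : 0 < minn i j by rewrite leq_min hi hj.
  by move: hb; rewrite hm /= => /eqP.
- by move/eqP: hc.
Qed.

Lemma in_KI x l i j : 0 < i -> 0 < j -> (forall k, k < l -> x (i + k) = x (j + k)) ->
  x i.-1 <> x j.-1 -> x (i + l) <> x (j + l) -> in_K x l i j.
Proof.
move=> hi hj ha hb hc.
rewrite /in_K /is_line /rp hi hj /=.
apply/and4P; split.
- by apply/eqP => e; apply: hb; rewrite e.
- by apply/allP => k; rewrite mem_iota add0n => /ha ->.
- by apply/implyP => _; apply/eqP.
- by apply/eqP.
Qed.

Lemma diag_eq x K l Q i j i' j' :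
  (forall i d l, 0 < d -> (forall k, i <= k -> k < i + l -> x (k + d) = x k) ->
      l + d < K * d.+1) ->
  0 < Q -> (2 * K + 1) * Q <= l -> in_K x l i j -> in_K x l i' j' ->
  i < i' + Q -> i' < i + Q -> j < j' + Q -> j' < j + Q -> j + i' < j' + i -> False.
Proof.
move=> hPF hQ hl /in_KP [hi hj ha _ _] /in_KP [hi' hj' ha' _ _] h1 h2 h3 h4 h5.
set a := maxn i i'.
have ea : a = maxn i i' := erefl. clearbody a.
have ha1 : i <= a by lia.
have ha2 : i' <= a by lia.
have ha3 : a < i + Q by lia.
have ha4 : a < i' + Q by lia.
set e := j' + i - j - i'.
have ee : e = j' + i - j - i' := erefl. clearbody e.
have he : 0 < e by lia.
have hQl : Q <= l by nia.
have hlt : l - Q + e < K * e.+1.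
  apply: (hPF (a - i + j)) => // k hk1 hk2.
  have -> : k + e = j' + (k + i - j - i') by lia.
  rewrite -ha'; last lia.
  have -> : i' + (k + i - j - i') = i + (k - j) by lia.
  rewrite ha; last lia.
  by congr x; lia.
have : e.+1 <= 2 * Q by lia.
nia.
Qed.

Lemma same_diag x l i j i' j' : in_K x l i j -> in_K x l i' j' ->
  i < i' -> i' < i + l -> i + j' = i' + j -> False.
Proof.
move=> /in_KP [hi hj ha _ _] /in_KP [hi' hj' _ hb _] h1 h2 h3.
apply: hb.
have -> : i'.-1 = i + (i'.-1 - i) by lia.
have -> : j'.-1 = j + (i'.-1 - i) by lia.
by apply: ha; lia.
Qed.

Lemma line_inj x K l Q i j i' j' :
  (forall i d l, 0 < d -> (forall k, i <= k -> k < i + l -> x (k + d) = x k) ->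
      l + d < K * d.+1) ->
  0 < Q -> (Q = 1 \/ (2 * K + 1) * Q <= l) -> in_K x l i j -> in_K x l i' j' ->
  i %/ Q = i' %/ Q -> j %/ Q = j' %/ Q -> i = i' /\ j = j'.
Proof.
move=> hPF hQ [->|hl] hL hL'; first by rewrite !divn1.
move=> ei ej.
have hi1 : i < i' + Q.
  by rewrite {1}(divn_eq i Q) {1}(divn_eq i' Q) ei; have := ltn_pmod i hQ; lia.
have hi2 : i' < i + Q.
  by rewrite {1}(divn_eq i Q) {1}(divn_eq i' Q) ei; have := ltn_pmod i' hQ; lia.
have hj1 : j < j' + Q.
  by rewrite {1}(divn_eq j Q) {1}(divn_eq j' Q) ej; have := ltn_pmod j hQ; lia.
have hj2 : j' < j + Q.
  by rewrite {1}(divn_eq j Q) {1}(divn_eq j' Q) ej; have := ltn_pmod j' hQ; lia.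
have hQl : Q <= l by nia.
case: (ltngtP (j + i') (j' + i)) => hc.
- by exfalso; apply: (diag_eq hPF hQ hl hL hL').
- by exfalso; apply: (diag_eq hPF hQ hl hL' hL) => //; lia.
- case: (ltngtP i i') => hii.
  + by exfalso; apply: (same_diag hL hL') => //; lia.
  + by exfalso; apply: (same_diag hL' hL) => //; lia.
  + by split => //; lia.
Qed.


Lemma countK_card x l n : countK x l n.+1 =
  #|[set p : 'I_n.+1 * 'I_n.+1 | in_K x l p.1 p.2]|.
Proof.
rewrite /countK.
have e1 : \sum_(1 <= i < n.+1) \sum_(1 <= j < n.+1) (in_K x l i j : nat) =
          \sum_(0 <= i < n.+1) \sum_(0 <= j < n.+1) (in_K x l i j : nat).
  rewrite [RHS]big_ltn //.
  have -> : \sum_(0 <= j < n.+1) (in_K x l 0 j : nat) = 0 by rewrite big1.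
  rewrite add0n; apply: eq_bigr => i _.
  rewrite [RHS]big_ltn //.
  by rewrite {2}/in_K andbF.
rewrite e1 big_mkord.
under eq_bigr => i _ do rewrite big_mkord.
rewrite pair_bigA /= -sum1_card [RHS]big_mkcond /=.
by apply: eq_bigr => p _; rewrite inE; case: (in_K _ _ _ _).
Qed.

Lemma count_upper x K l n Q :
  (forall i d l, 0 < d -> (forall k, i <= k -> k < i + l -> x (k + d) = x k) ->
      l + d < K * d.+1) ->
  0 < Q -> (Q = 1 \/ (2 * K + 1) * Q <= l) -> countK x l n.+1 <= (n %/ Q).+1 ^ 2.
Proof.
move=> hPF hQ hQl; rewrite countK_card.
set A := [set p : 'I_n.+1 * 'I_n.+1 | in_K x l p.1 p.2].
pose f := fun p : 'I_n.+1 * 'I_n.+1 =>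
  ((inord (p.1 %/ Q) : 'I_(n %/ Q).+1), (inord (p.2 %/ Q) : 'I_(n %/ Q).+1)).
have hdiv : forall a : 'I_n.+1, a %/ Q < (n %/ Q).+1.
  by move=> a; rewrite ltnS leq_div2r // -ltnS.
have finj : {in A &, injective f}.
  move=> [a b] [a' b']; rewrite !inE /= => ha hb [e1 e2].
  have e1' := congr1 val e1; have e2' := congr1 val e2.
  rewrite /= !inordK ?hdiv // in e1' e2'.
  have [h1 h2] := line_inj hPF hQ hQl ha hb e1' e2'.
  by congr pair; apply: val_inj.
rewrite -(card_in_imset finj).
apply: leq_trans (max_card _) _.
by rewrite card_prod card_ord expnS expn1.
Qed.

Lemma count_lower x K l n i0 j0 :
  (forall m i j, 0 < m -> exists p, j <= p /\ p + m <= j + K * m /\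
    forall e, e < m -> x (p + e) = x (i + e)) ->
  in_K x l i0 j0 -> (n.+1 %/ (K * (l + 2))) ^ 2 <= countK x l n.+1.
Proof.
move=> hLR hL; have [hi0 hj0 ha hb hc] := in_KP hL.
rewrite countK_card.
set A := [set p : 'I_n.+1 * 'I_n.+1 | in_K x l p.1 p.2].
set m := l + 2; set W := K * m; set N := n.+1 %/ W.
have hm : 0 < m by rewrite /m addn2.
pose P c (w : nat) p := [&& w * W <= p, p + m <= w * W + W &
    [forall e : 'I_m, x (p + e) == x (c.-1 + e)]].
have ex : forall c w, exists p, P c w p.
  move=> c w; have [p [h1 [h2 h3]]] := hLR m c.-1 (w * W) hm.
  exists p; rewrite /P h1 h2 /=; apply/forallP => e; apply/eqP; exact: h3.
pose p1 w := xchoose (ex i0 w); pose p2 w := xchoose (ex j0 w).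
have hP1 : forall w, P i0 w (p1 w) by move=> w; apply: xchooseP.
have hP2 : forall w, P j0 w (p2 w) by move=> w; apply: xchooseP.
have hPP : forall c w p, P c w p -> [/\ w * W <= p, p + m <= w * W + W &
     forall e, e < m -> x (p + e) = x (c.-1 + e)].
  move=> c w p /and3P [h1 h2 /forallP h3]; split => // e he.
  by apply/eqP; exact: (h3 (Ordinal he)).
have hbnd : forall c (w : 'I_N) p, P c w p -> p.+1 < n.+1.
  move=> c w p /hPP [h1 h2 _].
  have hw : (w.+1) * W <= N * W by rewrite leq_mul2r ltn_ord orbT.
  have hN : N * W <= n.+1 by rewrite leq_trunc_div.
  move: h2; rewrite /m; nia.
pose g := fun w : 'I_N * 'I_N =>
  ((inord (p1 w.1).+1 : 'I_n.+1), (inord (p2 w.2).+1 : 'I_n.+1)).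
have hinj1 : forall c (w w' : 'I_N) p p', P c w p -> P c w' p' -> p = p' -> w = w'.
  move=> c w w' p p' /hPP [h1 h2 _] /hPP [h1' h2' _] e; apply: val_inj => /=.
  case: (ltngtP w w') => // hw; exfalso.
  + have : w.+1 * W <= w' * W by rewrite leq_mul2r hw orbT.
    move: h2 h1'; rewrite mulSn; lia.
  + have : w'.+1 * W <= w * W by rewrite leq_mul2r hw orbT.
    move: h2' h1; rewrite mulSn; lia.
have ginj : injective g.
  move=> [w1 w2] [w1' w2'] [e1 e2].
  have e1' := congr1 val e1; have e2' := congr1 val e2.
  rewrite /= !inordK ?(hbnd _ _ _ (hP1 _)) ?(hbnd _ _ _ (hP2 _)) // in e1' e2'.
  case: e1' => e1'; case: e2' => e2'.
  by rewrite (hinj1 _ _ _ _ _ (hP1 w1) (hP1 w1') e1') (hinj1 _ _ _ _ _ (hP2 w2) (hP2 w2') e2').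
have sub : g @: setT \subset A.
  apply/subsetP => _ /imsetP [[w w'] _ ->]; rewrite inE /=.
  rewrite !inordK ?(hbnd _ _ _ (hP1 _)) ?(hbnd _ _ _ (hP2 _)) //.
  have [_ _ e1] := hPP _ _ _ (hP1 w); have [_ _ e2] := hPP _ _ _ (hP2 w').
  apply: in_KI => //.
  - move=> k hk.
    have -> : (p1 w).+1 + k = p1 w + k.+1 by rewrite addSnnS.
    have -> : (p2 w').+1 + k = p2 w' + k.+1 by rewrite addSnnS.
    rewrite e1 ?e2 /m; try lia.
    have -> : i0.-1 + k.+1 = i0 + k by lia.
    have -> : j0.-1 + k.+1 = j0 + k by lia.
    by apply: ha.
  - rewrite /= -[p1 w]addn0 -[p2 w']addn0 e1 ?e2 // addn0 addn0; exact: hb.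
  - have -> : (p1 w).+1 + l = p1 w + l.+1 by rewrite addSnnS.
    have -> : (p2 w').+1 + l = p2 w' + l.+1 by rewrite addSnnS.
    rewrite e1 ?e2 /m; try lia.
    have -> : i0.-1 + l.+1 = i0 + l by lia.
    have -> : j0.-1 + l.+1 = j0 + l by lia.
    exact: hc.
apply: leq_trans (subset_leq_card sub).
by rewrite card_imset // cardsT card_prod card_ord expnS expn1.
Qed.


Lemma exists_line x l n : 0 < countK x l n.+1 -> exists i j, [/\ i < n.+1, j < n.+1 & in_K x l i j].
Proof.
rewrite countK_card card_gt0 => /set0Pn [[a b]]; rewrite inE /= => h.
by exists a, b; split.
Qed.

Lemma l_small x K l i j n :
  (forall i d l, 0 < d -> (forall k, i <= k -> k < i + l -> x (k + d) = x k) ->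
      l + d < K * d.+1) ->
  in_K x l i j -> i < n -> j < n -> l < K * n.
Proof.
move=> hPF hL hi hj; have [hi0 hj0 ha hb hc] := in_KP hL.
case: (ltngtP i j) => hij.
- have := hPF i (j - i) l; rewrite subn_gt0 => /(_ hij) h.
  have : l + (j - i) < K * (j - i).+1.
    apply: h => k hk1 hk2.
    have -> : k + (j - i) = j + (k - i) by lia.
    have -> : k = i + (k - i) by lia.
    by rewrite -ha; [congr x; lia | lia].
  have : K * (j - i).+1 <= K * n by rewrite leq_mul2l; apply/orP; right; lia.
  lia.
- have := hPF j (i - j) l; rewrite subn_gt0 => /(_ hij) h.
  have : l + (i - j) < K * (i - j).+1.
    apply: h => k hk1 hk2.
    have -> : k + (i - j) = i + (k - j) by lia.
    have -> : k = j + (k - j) by lia.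
    by rewrite ha; [congr x; lia | lia].
  have : K * (i - j).+1 <= K * n by rewrite leq_mul2l; apply/orP; right; lia.
  lia.
- by exfalso; apply: hb; rewrite hij.
Qed.

Lemma nat_upper x K l n :
  (forall i d l, 0 < d -> (forall k, i <= k -> k < i + l -> x (k + d) = x k) ->
      l + d < K * d.+1) ->
  0 < l -> 1 <= n -> 0 < countK x l n.+1 ->
  countK x l n.+1 * l ^ 2 <= 2 * (2 * (2 * K + 1) + K) ^ 2 * (n.+1 ^ 2 - n.+1).
Proof.
move=> hPF hl hn hc.
have [i [j [hi hj hL]]] := exists_line hc.
have hlK := l_small hPF hL hi hj.
set G := 2 * K + 1.
have hG : 0 < G by rewrite /G addn1.
have hbound : exists Q, [/\ 0 < Q, (Q = 1 \/ G * Q <= l) & (n %/ Q).+1 * l <= (2 * G + K) * n.+1].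
  case: (posnP (l %/ G)) => hq.
  - exists 1; split => //; first by left.
    have : l < G by move: (divn_eq l G) (ltn_pmod l hG); rewrite hq; lia.
    rewrite divn1; nia.
  - exists (l %/ G); split => //; first by right; rewrite mulnC leq_trunc_div.
    have h1 : l < G * (l %/ G).+1 by rewrite mulnC ltn_ceil.
    have h2 : n %/ (l %/ G) * (l %/ G) <= n by rewrite leq_trunc_div.
    set Q := l %/ G in hq h1 h2 *.
    have h3 : n %/ Q * l <= n %/ Q * (2 * G * Q) by rewrite leq_mul2l; apply/orP; right; nia.
    nia.
have [Q [hQ hQl hQb]] := hbound.
have hcu := count_upper n hPF hQ hQl.
have e : countK x l n.+1 * l ^ 2 <= ((2 * G + K) * n.+1) ^ 2.
  apply: leq_trans (_ : ((n %/ Q).+1 * l) ^ 2 <= _); last by rewrite leq_exp2r.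
  rewrite expnMn.
  by apply: leq_mul.
apply: (leq_trans e).
have hn2 : n.+1 ^ 2 <= 2 * (n.+1 ^ 2 - n.+1).
  have : 2 * n.+1 <= n.+1 ^ 2 by rewrite -mulnn leq_mul2r ltnS hn orbT.
  lia.
rewrite expnMn -mulnA mulnCA.
exact: leq_mul (leqnn _) hn2.
Qed.

Lemma nat_lower x K l n :
  0 < K ->
  (forall m i j, 0 < m -> exists p, j <= p /\ p + m <= j + K * m /\
    forall e, e < m -> x (p + e) = x (i + e)) ->
  0 < l -> 0 < countK x l n.+1 ->
  n.+1 ^ 2 <= 36 * K ^ 2 * l ^ 2 * countK x l n.+1.
Proof.
move=> hK hLR hl hc.
have [i [j [hi hj hL]]] := exists_line hc.
have hlow := count_lower n hLR hL.
set W := K * (l + 2) in hlow.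
set N := n.+1 %/ W in hlow.
set C := countK x l n.+1 in hc hlow *.
have hW : 0 < W by rewrite /W muln_gt0 hK addn2.
have h0 : n.+1 < N.+1 * W by rewrite ltn_ceil.
have h1 : N.+1 ^ 2 <= 4 * C.
  case: (posnP N) => hN.
    by rewrite hN; lia.
  apply: leq_trans (_ : (2 * N) ^ 2 <= _).
    by rewrite leq_exp2r //; lia.
  by rewrite expnMn leq_mul2l hlow orbT.
have h2 : W <= 3 * K * l.
  have h : l + 2 <= 3 * l by lia.
  by rewrite /W [3 * K]mulnC -mulnA leq_mul2l h orbT.
have h3 : n.+1 ^ 2 <= (N.+1 * W) ^ 2 by rewrite leq_exp2r // ltnW.
apply: (leq_trans h3); rewrite expnMn.
have h4 : W ^ 2 <= (3 * K * l) ^ 2 by rewrite leq_exp2r.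
apply: leq_trans (leq_mul h1 h4) _.
rewrite !expnMn.
have -> : 36 = 4 * 3 ^ 2 by [].
by rewrite [4 * C]mulnC -!mulnA mulnC !mulnA.
Qed.


Unset Implicit Arguments. Set Strict Implicit.
Import Order.TTheory GRing.Theory Num.Theory.
Local Open Scope ring_scope.

Theorem lemma3p1 (R : realFieldType) (zeta : bool -> seq bool) (q : nat)
  (x : nat -> bool) :
  (2 <= q)%N -> const_length zeta q -> primitive zeta -> aperiodic zeta ->
  nth true (zeta false) 0%N = false ->
  is_fixed_point zeta q x -> x 0%N = false ->
  exists c0 c : R, [/\ 0 < c0, c0 <= 1, 1 <= c &
    forall l n : nat, (1 <= l)%N -> (2 <= n)%N -> (0 < countK x l n)%N ->
      c0 / (l%:R ^+ 2) <= (countK x l n)%:R / (n%:R ^+ 2 - n%:R) /\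
      (countK x l n)%:R / (n%:R ^+ 2 - n%:R) <= c / (l%:R ^+ 2)].
Proof.
move=> hq hc hp hap _ hf hx0.
have [K [hK [hLR hPF]]] := lr_pf hq hc hf hx0 hp hap.
set C := (2 * (2 * (2 * K + 1) + K) ^ 2)%N.
set M := (36 * K ^ 2)%N.
have hM : (0 < M)%N by rewrite /M muln_gt0 expn_gt0 hK.
have hC : (1 <= C)%N by rewrite /C muln_gt0 expn_gt0 addn_gt0 hK orbT.
exists (M%:R^-1), (C%:R); split.
- by rewrite invr_gt0 ltr0n.
- by rewrite invf_le1 ?ltr0n // ler1n.
- by rewrite ler1n.
move=> l [|[|n]] hl hn hcK //.
have hL : 0 < (l%:R : R) ^+ 2 by rewrite exprn_gt0 // ltr0n.
have eD : (n.+2)%:R ^+ 2 - (n.+2)%:R = ((n.+2 ^ 2 - n.+2)%N)%:R :> R.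
  rewrite natrB ?natrX //.
  by rewrite -mulnn leq_pmull.
have hD : 0 < ((n.+2 ^ 2 - n.+2)%N)%:R :> R.
  rewrite ltr0n subn_gt0 -mulnn.
  by rewrite -{1}[n.+2]muln1 ltn_pmul2l.
rewrite eD; split.
- rewrite ler_pdivlMr // mulrAC ler_pdivrMr //.
  rewrite mulrC ler_pdivrMr ?ltr0n // -!natrX -!natrM ler_nat.
  have := nat_lower hK hLR hl hcK.
  set cc := countK x l n.+2 => h.
  apply: leq_trans (leq_subr _ _) _.
  apply: (leq_trans h).
  rewrite /M; apply: eq_leq.
  set a := (36 * K ^ 2)%N; set b := (l ^ 2)%N.
  rewrite mulnC mulnA.
  by rewrite mulnAC.
- rewrite ler_pdivrMr // mulrAC ler_pdivlMr // -!natrX -!natrM ler_nat.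
  exact: nat_upper hPF hl (ltn0Sn n) hcK.
Qed.
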